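(* Let $\kappa=4$ and let $\boldsymbol\pi,Q,U$ be as in the context, and suppose $\nu_{ijj}=0$ for all $1<i\le j\le 4$. Then, after possibly permuting the states (i.e., simultaneously permuting the entries of $\boldsymbol\pi$ and the rows of $U$) and multiplying some columns of $U$ by $-1$, one of the following holds: Case A: $\boldsymbol\pi=(1/4,1/4,1/4,1/4)$ and for some $b,c\ge0$ with $b^2+c^2=2$, $$U=\begin{pmatrix}1&c&b&1\\1&-c&-b&1\\1&-b&c&-1\\1&b&-c&-1\end{pmatrix};$$ Case B: $\boldsymbol\pi=(1/8,1/8,1/4,1/2)$ and $$U=\begin{pmatrix}1&2&\sqrt2&1\\1&-2&\sqrt2&1\\1&0&-\sqrt2&1\\1&0&0&-1\end{pmatrix}.$$
   Context: $\boldsymbol\pi=(\pi_1,\dots,\pi_4)$ with $\pi_i>0$, $\sum\pi_i=1$; $Q$ a $4\times4$ matrix with positive off-diagonal entries, zero row sums, $\operatorname{diag}(\boldsymbol\pi)Q$ symmetric. $U$ is a real matrix with $Q=U\operatorname{diag}(0,\lambda_2,\lambda_3,\lambda_4)U^{-1}$, $0>\lambda_2\ge\lambda_3\ge\lambda_4$, $UU^T=\operatorname{diag}(\boldsymbol\pi)^{-1}$ (equivalently $U^T\operatorname{diag}(\boldsymbol\pi)U=I$), and first column $\mathbf 1$. $\nu_{ijk}=\sum_l\pi_lU_{li}U_{lj}U_{lk}$. *)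

(* Defs.v *)
From HB Require Import structures.
From mathcomp Require Import all_boot all_order all_algebra all_fingroup.
Set Implicit Arguments. Unset Strict Implicit. Unset Printing Implicit Defensive.
Import Order.TTheory GRing.Theory Num.Theory.
Local Open Scope ring_scope.

Definition mx_of_rows (R : ringType) (rs : seq (seq R)) : 'M[R]_4 :=
  \matrix_(i < 4, j < 4) nth 0 (nth [::] rs i) j.

Definition nu (R : ringType) (pi : 'rV[R]_4) (U : 'M[R]_4) (i j k : 'I_4) : R :=
  \sum_(l < 4) pi 0 l * U l i * U l j * U l k.

Definition eigdiag (R : ringType) (l2 l3 l4 : R) : 'M[R]_4 :=
  diag_mx (\row_(j < 4) nth 0 [:: 0; l2; l3; l4] j).

Definition perm_pi (R : ringType) (s : 'S_4) (pi : 'rV[R]_4) : 'rV[R]_4 :=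
  \row_(i < 4) pi 0 (s i).
Definition perm_flip_U (R : ringType) (s : 'S_4) (e : 'I_4 -> bool) (U : 'M[R]_4)
  : 'M[R]_4 := \matrix_(i < 4, j < 4) ((-1) ^+ e j * U (s i) j).

Definition caseA_U (R : ringType) (b c : R) : 'M[R]_4 :=
  mx_of_rows [:: [:: 1; c; b; 1];
                 [:: 1; -c; -b; 1];
                 [:: 1; -b; c; -1];
                 [:: 1; b; -c; -1]].

Definition caseB_U (R : rcfType) : 'M[R]_4 :=
  let r := Num.sqrt (2 : R) in
  mx_of_rows [:: [:: 1; 2; r; 1];
                 [:: 1; -2; r; 1];
                 [:: 1; 0; -r; 1];
                 [:: 1; 0; 0; -1]].

Definition rv4 (R : ringType) (a b c d : R) : 'rV[R]_4 :=
  \row_(j < 4) nth 0 [:: a; b; c; d] j.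

(* Main.v *)
Require Import Defs.
From HB Require Import structures.
From mathcomp Require Import all_boot all_order all_algebra all_fingroup.
From Stdlib Require Import Ring Field.
Import Order.TTheory GRing.Theory Num.Theory.
Local Open Scope ring_scope.

Definition i0 : 'I_4 := @Ordinal 4 0 isT.
Definition i1 : 'I_4 := @Ordinal 4 1 isT.
Definition i2 : 'I_4 := @Ordinal 4 2 isT.
Definition i3 : 'I_4 := @Ordinal 4 3 isT.

Lemma sum4 (R : nzRingType) (F : 'I_4 -> R) :
  \sum_(i<4) F i = F i0 + F i1 + F i2 + F i3.
Proof.
rewrite !big_ord_recr big_ord0 /= add0r.
by congr (F _ + F _ + F _ + F _); apply: val_inj.
Qed.

Section Main.
Variable R : rcfType.
Definition addR (x y : R) : R := x + y.
Definition mulR (x y : R) : R := x * y.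
Definition oppR (x : R) : R := - x.
Definition invR (x : R) : R := x^-1.
Definition zeroR : R := 0.
Definition idR (x : R) : R := x.
Definition oneR : R := 1.
Definition subR (x y : R) : R := addR x (oppR y).
Definition divR (x y : R) : R := mulR x (invR y).
Definition natR n : R := n%:R.
Lemma natR0 : natR 0 = zeroR. Proof. by []. Qed.
Lemma natRS n : natR n.+1 = addR (natR n) oneR. Proof. by rewrite /natR mulrSr. Qed.
Lemma Rth : ring_theory zeroR oneR addR mulR subR oppR (@eq R).
Proof.
rewrite /zeroR /oneR /addR /mulR /subR /oppR.
split.
exact: add0r. exact: addrC. exact: addrA. exact: mul1r. exact: mulrC.
exact: mulrA. exact: mulrDl. by []. exact: subrr.
Qed.
Lemma Fth : field_theory zeroR oneR addR mulR subR oppR divR invR (@eq R).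
Proof. split. exact Rth. rewrite /zeroR /oneR; apply/eqP; exact: oner_neq0. by [].
 by rewrite /zeroR /oneR /mulR /invR => p Hp; rewrite mulVf //; apply/eqP.
Qed.
Add Field Rf : Fth.
Ltac rebn n :=
  lazymatch n with
  | O => constr:(zeroR)
  | S O => constr:(oneR)
  | S ?m => let r := rebn m in constr:(addR r oneR)
  end.
Ltac rebe a n :=
  lazymatch n with
  | O => constr:(oneR)
  | S O => constr:(a)
  | S ?m => let r := rebe a m in constr:(mulR r a)
  end.
Ltac reb t :=
  lazymatch t with
  | @Algebra.add _ ?a ?b => let a' := reb a in let b' := reb b in constr:(addR a' b')
  | @GRing.mul _ ?a ?b => let a' := reb a in let b' := reb b in constr:(mulR a' b')
  | @Algebra.opp _ ?a => let a' := reb a in constr:(oppR a')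
  | @GRing.inv _ ?a => let a' := reb a in constr:(invR a')
  | @GRing.exp _ ?a ?n => let a' := reb a in rebe a' n
  | @Algebra.natmul _ (GRing.one _) ?n => constr:(natR n)
  | @Algebra.natmul _ ?a ?n => let a' := reb a in constr:(mulR a' (natR n))
  | @Algebra.zero _ => constr:(zeroR)
  | GRing.one _ => constr:(oneR)
  | _ => constr:(idR t)
  end.
Ltac normR := lazymatch goal with |- @eq _ ?a ?b =>
  let a' := reb a in let b' := reb b in change (@eq R a' b') end;
  rewrite ?natRS ?natR0.
Ltac rg := normR; ring.
Lemma pos_nz (x : R) : 0 < x -> x <> zeroR.
Proof. by move=> H E; move: H; rewrite E /zeroR ltxx. Qed.
Ltac pos := rewrite /addR /mulR /oneR; repeat first [apply: addr_gt0 | apply: mulr_gt0 | apply: ltr01].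
Ltac fld := normR; field; repeat split; try solve [apply: pos_nz; pos].

Record Hyp (pi : 'rV[R]_4) (U : 'M[R]_4) : Prop := MkHyp {
  hy1 : forall i, 0 < pi 0 i;
  hy2 : \sum_(i<4) pi 0 i = 1;
  hy3 : forall l, U l i0 = 1;
  hy4 : forall j k, \sum_(l<4) pi 0 l * U l j * U l k = (j == k)%:R;
  hy5 : forall l m, pi 0 m * \sum_(j<4) U l j * U m j = (l == m)%:R;
  hy6 : forall i j : 'I_4, (0 < i)%N -> (i <= j)%N ->
        \sum_(l<4) pi 0 l * U l i * U l j * U l j = 0 }.

Definition Concl (pi : 'rV[R]_4) (U : 'M[R]_4) :=
  exists (s : 'S_4) (e : 'I_4 -> bool),
    (perm_pi s pi = rv4 (1/4) (1/4) (1/4) (1/4) /\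
     exists b c : R, [/\ 0 <= b, 0 <= c, b ^+ 2 + c ^+ 2 = 2 &
                         perm_flip_U s e U = caseA_U b c])
    \/
    (perm_pi s pi = rv4 (1/8) (1/8) (1/4) (1/2) /\
     perm_flip_U s e U = caseB_U R).

Lemma pfE s e (U : 'M[R]_4) i j : perm_flip_U s e U i j = (-1) ^+ e j * U (s i) j.
Proof. by rewrite mxE. Qed.
Lemma ppE s (pi : 'rV[R]_4) i : perm_pi s pi 0 i = pi 0 (s i).
Proof. by rewrite mxE. Qed.

Lemma Concl_trans s e pi U :
  Concl (perm_pi s pi) (perm_flip_U s e U) -> Concl pi U.
Proof.
move=> [s' [e' H]].
have E1 : perm_pi s' (perm_pi s pi) = perm_pi (s' * s)%g pi.
  by apply/rowP => i; rewrite !ppE permM.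
have E2 : perm_flip_U s' e' (perm_flip_U s e U) =
          perm_flip_U (s' * s)%g (fun j => e' j (+) e j) U.
  by apply/matrixP => i j; rewrite !pfE permM signr_addb mulrA.
exists (s' * s)%g, (fun j => e' j (+) e j); by rewrite -E1 -E2.
Qed.

Lemma sumperm (s : 'S_4) (F : 'I_4 -> R) : \sum_(l<4) F (s l) = \sum_(l<4) F l.
Proof. by rewrite [RHS](reindex_inj (@perm_inj _ s)). Qed.

Lemma sgsq (b : bool) : (-1) ^+ b * (-1) ^+ b = 1 :> R.
Proof. by case: b; rewrite ?expr0 ?expr1 ?mulr1 ?mulrNN ?mul1r. Qed.

Lemma Hyp_trans s e pi U : e i0 = false -> Hyp pi U ->
  Hyp (perm_pi s pi) (perm_flip_U s e U).
Proof.
move=> He [h1 h2 h3 h4 h5 h6]; split.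
- by move=> i; rewrite ppE.
- by rewrite (eq_bigr (fun l => pi 0 (s l))) ?sumperm // => l _; rewrite ppE.
- by move=> l; rewrite pfE h3 He expr0 mul1r.
- move=> j k.
  rewrite (eq_bigr (fun l => (-1)^+ e j * (-1) ^+ e k *
          (pi 0 (s l) * U (s l) j * U (s l) k))); last first.
    move=> l _; rewrite !pfE ppE; move: ((-1) ^+ e j) ((-1) ^+ e k) (pi 0 (s l)) (U (s l) j) (U (s l) k) => u v a b c; rg.
  rewrite -mulr_sumr (sumperm s (fun l => pi 0 l * U l j * U l k)) h4.
  by case: (eqVneq j k) => [->|_]; rewrite ?sgsq ?mulr0 ?mulr1.
- move=> l m; rewrite ppE.
  rewrite (eq_bigr (fun j => U (s l) j * U (s m) j)); last first.
    by move=> j _; rewrite !pfE; move: (sgsq (e j)); move: ((-1) ^+ e j) (U (s l) j) (U (s m) j) => u a b E; rewrite -[RHS]mul1r -E; rg.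
  by rewrite h5 (inj_eq (@perm_inj _ s)).
- move=> i j Hi Hij.
  rewrite (eq_bigr (fun l => (-1)^+ e i * (-1) ^+ e j * (-1) ^+ e j *
          (pi 0 (s l) * U (s l) i * U (s l) j * U (s l) j))); last first.
    by move=> l _; rewrite !pfE ppE; move: ((-1) ^+ e i) ((-1) ^+ e j) (pi 0 (s l)) (U (s l) i) (U (s l) j) => u v a b c; rg.
  by rewrite -mulr_sumr (sumperm s (fun l => pi 0 l * U l i * U l j * U l j)) h6 // mulr0.
Qed.


Lemma expand pi U (w : 'I_4 -> R) l : Hyp pi U ->
  w l = \sum_(j<4) U l j * (\sum_(m<4) pi 0 m * U m j * w m).
Proof.
move=> [h1 h2 h3 h4 h5 h6].
under eq_bigr do rewrite big_distrr.
rewrite exchange_big /=.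
rewrite (eq_bigr (fun m => (pi 0 m * \sum_(j<4) U l j * U m j) * w m)); last first.
  by move=> m _; rewrite mulr_sumr mulr_suml; apply: eq_bigr => j _; rg.
under eq_bigr do rewrite h5.
rewrite (bigD1 l) //= eqxx mul1r big1 ?addr0 // => m /negbTE.
by rewrite eq_sym => ->; rewrite mul0r.
Qed.

Lemma c0 pi U (w : 'I_4 -> R) : Hyp pi U ->
  \sum_(m<4) pi 0 m * U m i0 * w m = \sum_(m<4) pi 0 m * w m.
Proof. by move=> [h1 h2 h3 h4 h5 h6]; apply: eq_bigr => m _; rewrite h3 mulr1. Qed.

Lemma cnu pi U (j k : 'I_4) : Hyp pi U -> (0 < j)%N -> (j <= k)%N ->
  \sum_(m<4) pi 0 m * U m j * (U m k ^+ 2) = 0.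
Proof.
move=> [h1 h2 h3 h4 h5 h6] Hj Hk; rewrite -[RHS](h6 j k) //.
by apply: eq_bigr => m _; rewrite expr2 !mulrA.
Qed.

Lemma csq pi U k : Hyp pi U -> \sum_(m<4) pi 0 m * (U m k ^+ 2) = 1.
Proof.
move=> [h1 h2 h3 h4 h5 h6].
transitivity (\sum_(l<4) pi 0 l * U l k * U l k); last by rewrite h4 eqxx.
by apply: eq_bigr => m _; rewrite expr2 !mulrA.
Qed.

Lemma Fz pi U l : Hyp pi U -> U l i3 ^+ 2 = 1.
Proof.
move=> H; rewrite (@expand pi U (fun m => U m i3 ^+ 2) l H) sum4 c0 // csq //.
rewrite (@cnu pi U i1 i3 H) // (@cnu pi U i2 i3 H) // (@cnu pi U i3 i3 H) //.
case: H => [_ _ h3 _ _ _]; rewrite h3. rg.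
Qed.
Lemma Fy pi U : Hyp pi U -> exists t, forall l, U l i2 ^+ 2 = 1 + t * U l i3.
Proof.
move=> H; exists (\sum_(m<4) pi 0 m * U m i3 * (U m i2 ^+ 2)) => l.
rewrite (@expand pi U (fun m => U m i2 ^+ 2) l H) sum4 c0 // csq //.
rewrite (@cnu pi U i1 i2 H) // (@cnu pi U i2 i2 H) //.
case: H => [_ _ h3 _ _ _]; rewrite h3; rg.
Qed.

Lemma Fx pi U : Hyp pi U -> exists a q, forall l,
  U l i1 ^+ 2 = 1 + a * U l i2 + q * U l i3.
Proof.
move=> H; exists (\sum_(m<4) pi 0 m * U m i2 * (U m i1 ^+ 2)),
  (\sum_(m<4) pi 0 m * U m i3 * (U m i1 ^+ 2)) => l.
rewrite (@expand pi U (fun m => U m i1 ^+ 2) l H) sum4 c0 // csq //.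
rewrite (@cnu pi U i1 i1 H) //.
case: H => [_ _ h3 _ _ _]; rewrite h3; rg.
Qed.
Lemma mul0_l (a b : R) : a * b = 0 -> b != 0 -> a = 0.
Proof. by move/eqP; rewrite mulf_eq0 => /orP[/eqP//|/eqP->]; rewrite eqxx. Qed.

Lemma sqr_eq_pos (a b : R) : 0 < a -> 0 < b -> a ^+ 2 = b ^+ 2 -> a = b.
Proof.
move=> Ha Hb E; apply/eqP; rewrite -subr_eq0; apply/eqP.
apply: (@mul0_l _ (a + b)); last by rewrite gt_eqF // ltr_wpDr // ltW.
rewrite !expr2 in E; transitivity (a * a - b * b); first rg.
by rewrite E subrr.
Qed.

Lemma pairL (p0 p1 x0 x1 y0 y1 : R) : 0 < p0 -> 0 < p1 -> p0 + p1 = 1/2 ->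
  p0 * x0 + p1 * x1 = 0 -> p0 * y0 + p1 * y1 = 0 -> x0 * x1 + y0 * y1 = -2 ->
  y0 ^+ 2 = y1 ^+ 2 -> (y0 = 0 -> x0 ^+ 2 = x1 ^+ 2) ->
  [/\ p0 = 1/4, p1 = 1/4, x1 = - x0, y1 = - y0 & x0 ^+ 2 + y0 ^+ 2 = 2].
Proof.
move=> H0 H1 Hs Hx Hy Hd Ey Ex.
have Hp : p0 = p1.
  apply: sqr_eq_pos => //.
  have [y00|y0n] := eqVneq y0 0.
    have x0n : x0 != 0.
      apply/eqP => x00; move: Hd; rewrite x00 y00 !mul0r add0r => /eqP.
      by rewrite eq_sym oppr_eq0 pnatr_eq0.
    have := Ex y00 => Ex'.
    have E1 : p1 * x1 = - (p0 * x0) by apply/eqP; rewrite -addr_eq0 addrC Hx.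
    apply/eqP; rewrite -subr_eq0; apply/eqP; apply: (@mul0_l _ (x0 ^+ 2)).
      transitivity ((p0 * x0) ^+ 2 - (p1 * x1) ^+ 2 + p1 ^+ 2 * (x1 ^+ 2 - x0 ^+ 2)).
        rewrite !expr2; rg.
      by rewrite E1 Ex' sqrrN !subrr mulr0 addr0.
    by rewrite sqrf_eq0.
  have E1 : p1 * y1 = - (p0 * y0) by apply/eqP; rewrite -addr_eq0 addrC Hy.
  apply/eqP; rewrite -subr_eq0; apply/eqP; apply: (@mul0_l _ (y0 ^+ 2)).
    transitivity ((p0 * y0) ^+ 2 - (p1 * y1) ^+ 2 + p1 ^+ 2 * (y1 ^+ 2 - y0 ^+ 2)).
      rewrite !expr2; rg.
    by rewrite E1 Ey sqrrN !subrr mulr0 addr0.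
  by rewrite sqrf_eq0.
subst p1.
have P0 : p0 = 1/4.
  have -> : p0 = (p0 + p0) / 2 by fld.
  by rewrite Hs; fld.
have p0n : p0 != 0 by rewrite gt_eqF.
have Ex1 : x1 = - x0.
  apply/eqP; rewrite -subr_eq0 opprK; apply/eqP; apply: (@mul0_l _ p0) => //.
  by rewrite -Hx; rg.
have Ey1 : y1 = - y0.
  apply/eqP; rewrite -subr_eq0 opprK; apply/eqP; apply: (@mul0_l _ p0) => //.
  by rewrite -Hy; rg.
split=> //.
rewrite Ex1 Ey1 in Hd.
rewrite -[RHS]opprK -Hd !expr2; rg.
Qed.
Lemma orthn pi U j k : Hyp pi U -> j != k ->
  pi 0 i0 * U i0 j * U i0 k + pi 0 i1 * U i1 j * U i1 k
  + pi 0 i2 * U i2 j * U i2 k + pi 0 i3 * U i3 j * U i3 k = 0.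
Proof. by move=> [_ _ _ h4 _ _] /negbTE E; rewrite -(@sum4 _ (fun l => pi 0 l * U l j * U l k)) h4 E. Qed.
Lemma orthe pi U j : Hyp pi U ->
  pi 0 i0 * U i0 j * U i0 j + pi 0 i1 * U i1 j * U i1 j
  + pi 0 i2 * U i2 j * U i2 j + pi 0 i3 * U i3 j * U i3 j = 1.
Proof. by move=> [_ _ _ h4 _ _]; rewrite -(@sum4 _ (fun l => pi 0 l * U l j * U l j)) h4 eqxx. Qed.
Lemma compln pi U l m : Hyp pi U -> l != m ->
  1 + U l i1 * U m i1 + U l i2 * U m i2 + U l i3 * U m i3 = 0.
Proof.
move=> [h1 _ h3 _ h5 _] /negbTE E; have := h5 l m; rewrite E sum4 !h3 mul1r.
move/eqP; rewrite mulf_eq0 gt_eqF //= => /eqP.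
by rewrite -!addrA.
Qed.
Lemma comple pi U l : Hyp pi U ->
  pi 0 l * (1 + U l i1 ^+ 2 + U l i2 ^+ 2 + U l i3 ^+ 2) = 1.
Proof.
move=> [h1 _ h3 _ h5 _]; have := h5 l l; rewrite eqxx sum4 !h3 mul1r !expr2.
by rewrite -!addrA.
Qed.
Lemma sumx pi U j : Hyp pi U -> j != i0 ->
  pi 0 i0 * U i0 j + pi 0 i1 * U i1 j + pi 0 i2 * U i2 j + pi 0 i3 * U i3 j = 0.
Proof.
move=> H E; have := @orthn pi U j i0 H E; case: (H) => [_ _ h3 _ _ _].
by rewrite !h3 !mulr1.
Qed.
Lemma sump pi U : Hyp pi U -> pi 0 i0 + pi 0 i1 + pi 0 i2 + pi 0 i3 = 1.
Proof. by case=> [_ h2 _ _ _ _]; rewrite -(@sum4 _ (fun l => pi 0 l)). Qed.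
Lemma factsA pi U : Hyp pi U ->
  U i0 i3 = 1 -> U i1 i3 = 1 -> U i2 i3 = -1 -> U i3 i3 = -1 ->
  [/\ pi 0 i0 = 1/4, pi 0 i1 = 1/4, pi 0 i2 = 1/4 & pi 0 i3 = 1/4] /\
  [/\ U i1 i1 = - U i0 i1, U i1 i2 = - U i0 i2, U i3 i1 = - U i2 i1 &
      U i3 i2 = - U i2 i2] /\
  [/\ U i0 i1 ^+ 2 + U i0 i2 ^+ 2 = 2, U i2 i1 ^+ 2 + U i2 i2 ^+ 2 = 2 &
      U i0 i1 * U i2 i1 + U i0 i2 * U i2 i2 = 0].
Proof.
move=> H z0 z1 z2 z3.
have hp := H; case: hp => [h1 _ _ _ _ _].
have S := sump pi U H.
have Sz := @sumx pi U i3 H isT; rewrite z0 z1 z2 z3 in Sz.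
have Sx := @sumx pi U i1 H isT.
have Sy := @sumx pi U i2 H isT.
have Sxz := @orthn pi U i1 i3 H isT; rewrite z0 z1 z2 z3 in Sxz.
have Syz := @orthn pi U i2 i3 H isT; rewrite z0 z1 z2 z3 in Syz.
have [t Ht] := Fy pi U H.
have [a [q Hq]] := Fx pi U H.
have C01 := @compln pi U i0 i1 H isT; rewrite z0 z1 in C01.
have C23 := @compln pi U i2 i3 H isT; rewrite z2 z3 in C23.
have C02 := @compln pi U i0 i2 H isT; rewrite z0 z2 in C02.
have P01 : pi 0 i0 + pi 0 i1 = 1/2.
  have -> : pi 0 i0 + pi 0 i1 = ((pi 0 i0 + pi 0 i1 + pi 0 i2 + pi 0 i3) +
     (pi 0 i0 * 1 + pi 0 i1 * 1 + pi 0 i2 * -1 + pi 0 i3 * -1)) / 2 by fld.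
  by rewrite S Sz; fld.
have P23 : pi 0 i2 + pi 0 i3 = 1/2.
  have -> : pi 0 i2 + pi 0 i3 = ((pi 0 i0 + pi 0 i1 + pi 0 i2 + pi 0 i3) -
     (pi 0 i0 * 1 + pi 0 i1 * 1 + pi 0 i2 * -1 + pi 0 i3 * -1)) / 2 by fld.
  by rewrite S Sz; fld.
have half : forall A B C D : R, A + B + C + D = 0 -> A + B - C - D = 0 ->
   A + B = 0 /\ C + D = 0.
  move=> A B C D E1 E2; split.
    have -> : A + B = ((A + B + C + D) + (A + B - C - D)) / 2 by fld.
    by rewrite E1 E2; fld.
  have -> : C + D = ((A + B + C + D) - (A + B - C - D)) / 2 by fld.
  by rewrite E1 E2; fld.
have [X01 X23] : pi 0 i0 * U i0 i1 + pi 0 i1 * U i1 i1 = 0 /\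
                 pi 0 i2 * U i2 i1 + pi 0 i3 * U i3 i1 = 0.
  apply: half => //; rewrite -[RHS]Sxz; rg.
have [Y01 Y23] : pi 0 i0 * U i0 i2 + pi 0 i1 * U i1 i2 = 0 /\
                 pi 0 i2 * U i2 i2 + pi 0 i3 * U i3 i2 = 0.
  apply: half => //; rewrite -[RHS]Syz; rg.
have [pa pb xa ya na] : [/\ pi 0 i0 = 1/4, pi 0 i1 = 1/4, U i1 i1 = - U i0 i1,
     U i1 i2 = - U i0 i2 & U i0 i1 ^+ 2 + U i0 i2 ^+ 2 = 2].
  apply: pairL => //.
  - by rewrite -[RHS]addr0 -C01; rg.
  - by rewrite !Ht z0 z1.
  - move=> y0; have y1 : U i1 i2 = 0.
      by apply/eqP; rewrite -sqrf_eq0; apply/eqP; transitivity (U i0 i2 ^+ 2); [rewrite !Ht z0 z1 | rewrite y0 expr2 mulr0].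
    by rewrite !Hq y0 y1 z0 z1.
have [pc pd xc yc nc] : [/\ pi 0 i2 = 1/4, pi 0 i3 = 1/4, U i3 i1 = - U i2 i1,
     U i3 i2 = - U i2 i2 & U i2 i1 ^+ 2 + U i2 i2 ^+ 2 = 2].
  apply: pairL => //.
  - by rewrite -[RHS]addr0 -C23; rg.
  - by rewrite !Ht z2 z3.
  - move=> y0; have y1 : U i3 i2 = 0.
      by apply/eqP; rewrite -sqrf_eq0; apply/eqP; transitivity (U i2 i2 ^+ 2); [rewrite !Ht z2 z3 | rewrite y0 expr2 mulr0].
    by rewrite !Hq y0 y1 z2 z3.
split; first by [].
split; first by [].
split=> //.
by rewrite -[RHS]C02; rg.
Qed.
Lemma ord4 (P : 'I_4 -> Prop) : P i0 -> P i1 -> P i2 -> P i3 -> forall i, P i.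
Proof.
move=> H0 H1 H2 H3 [[|[|[|[|//]]]] Hi].
- by have -> : Ordinal Hi = i0 by apply: val_inj.
- by have -> : Ordinal Hi = i1 by apply: val_inj.
- by have -> : Ordinal Hi = i2 by apply: val_inj.
- by have -> : Ordinal Hi = i3 by apply: val_inj.
Qed.

Lemma sqsum0 (a b : R) : a ^+ 2 + b ^+ 2 = 0 -> a = 0 /\ b = 0.
Proof.
move=> /eqP; rewrite paddr_eq0 ?sqr_ge0 // => /andP[/eqP Ha /eqP Hb].
by split; apply/eqP; rewrite -sqrf_eq0 ?Ha ?Hb.
Qed.

Lemma rotL (x0 y0 x2 y2 : R) : x0 ^+ 2 + y0 ^+ 2 = 2 -> x2 ^+ 2 + y2 ^+ 2 = 2 ->
  x0 * x2 + y0 * y2 = 0 ->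
  (x2 = - y0 /\ y2 = x0) \/ (x2 = y0 /\ y2 = - x0).
Proof.
move=> N0 N2 D.
have K : ((x2 + y0) ^+ 2 + (y2 - x0) ^+ 2) * ((x2 - y0) ^+ 2 + (y2 + x0) ^+ 2) = 0.
  transitivity ((x2 ^+ 2 + y2 ^+ 2 + (x0 ^+ 2 + y0 ^+ 2)) ^+ 2
     - 4 * ((x0 ^+ 2 + y0 ^+ 2) * (x2 ^+ 2 + y2 ^+ 2) - (x0 * x2 + y0 * y2) ^+ 2)).
    rewrite !expr2; rg.
  rewrite N0 N2 D !expr2; rg.
move/eqP: K; rewrite mulf_eq0 => /orP[/eqP|/eqP] /sqsum0 [E1 E2].
- left; split; apply/eqP; rewrite -subr_eq0 ?opprK; apply/eqP => //.
- right; split; apply/eqP; rewrite -subr_eq0 ?opprK; apply/eqP => //.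
Qed.

Lemma L_A0 pi U : Hyp pi U ->
  U i0 i3 = 1 -> U i1 i3 = 1 -> U i2 i3 = -1 -> U i3 i3 = -1 ->
  0 <= U i0 i1 -> 0 <= U i0 i2 -> U i2 i1 = - U i0 i2 -> U i2 i2 = U i0 i1 ->
  Concl pi U.
Proof.
move=> H z0 z1 z2 z3 hx hy r1 r2.
have [[p0 p1 p2 p3] [[x1 y1 x3 y3] [n0 n2 d]]] := factsA pi U H z0 z1 z2 z3.
have hp := H; case: hp => [_ _ h3 _ _ _].
exists 1%g, (fun _ => false); left; split.
  apply/rowP; apply: ord4; rewrite ppE perm1 mxE /=; by [].
exists (U i0 i2), (U i0 i1); split => //; first by rewrite addrC.
apply/matrixP; apply: ord4; apply: ord4;
  rewrite pfE perm1 expr0 mul1r /caseA_U /mx_of_rows mxE /= ?h3 //=;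
  by rewrite ?x1 ?y1 ?x3 ?y3 ?r1 ?r2 ?z0 ?z1 ?z2 ?z3 ?opprK.
Qed.

Lemma Lflip (k : 'I_4) pi U : (i0 == k :> nat) = false -> Hyp pi U ->
  (forall V, Hyp pi V ->
     (forall l j, V l j = if (j == k :> nat) then - U l j else U l j) -> Concl pi V) ->
  Concl pi U.
Proof.
move=> Hk H C.
apply: (@Concl_trans 1%g (fun j : 'I_4 => (j == k :> nat))).
have -> : perm_pi 1%g pi = pi by apply/rowP => i; rewrite ppE perm1.
apply: C; first by move: (@Hyp_trans 1%g (fun j : 'I_4 => (j == k :> nat)) pi U Hk H);
  have -> : perm_pi 1%g pi = pi by apply/rowP => i; rewrite ppE perm1.
move=> l j; rewrite pfE perm1; case: (j == k :> nat).
  by rewrite expr1 mulN1r.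
by rewrite expr0 mul1r.
Qed.

Lemma Lswap (a b : 'I_4) pi U : Hyp pi U ->
  (forall pi' V, Hyp pi' V -> (forall l j, V l j = U (tperm a b l) j) ->
     (forall l, pi' 0 l = pi 0 (tperm a b l)) -> Concl pi' V) ->
  Concl pi U.
Proof.
move=> H C.
apply: (@Concl_trans (tperm a b) (fun _ => false)).
apply: C; first exact: Hyp_trans.
  by move=> l j; rewrite pfE expr0 mul1r.
by move=> l; rewrite ppE.
Qed.

Lemma L_A1 pi U : Hyp pi U ->
  U i0 i3 = 1 -> U i1 i3 = 1 -> U i2 i3 = -1 -> U i3 i3 = -1 ->
  0 <= U i0 i1 -> 0 <= U i0 i2 -> Concl pi U.
Proof.
move=> H z0 z1 z2 z3 hx hy.
have [[p0 p1 p2 p3] [[x1 y1 x3 y3] [n0 n2 d]]] := factsA pi U H z0 z1 z2 z3.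
have [[r1 r2]|[r1 r2]] := rotL _ _ _ _ n0 n2 d; first exact: L_A0.
apply: (@Lswap i2 i3 pi U H) => pi' V H' EV Ep.
apply: L_A0 => //; rewrite ?EV ?tpermL ?tpermR ?tpermD //.
- by rewrite x3 r1.
- by rewrite y3 r2 opprK.
Qed.

Lemma L_A pi U : Hyp pi U ->
  U i0 i3 = 1 -> U i1 i3 = 1 -> U i2 i3 = -1 -> U i3 i3 = -1 -> Concl pi U.
Proof.
move=> H z0 z1 z2 z3.
have K : forall V, Hyp pi V -> V i0 i3 = 1 -> V i1 i3 = 1 -> V i2 i3 = -1 ->
   V i3 i3 = -1 -> 0 <= V i0 i2 -> Concl pi V.
  move=> V HV w0 w1 w2 w3 hy.
  case: (lerP 0 (V i0 i1)) => hx; first exact: L_A1.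
  apply: (@Lflip i1 pi V erefl HV) => W HW EW.
  by apply: L_A1; rewrite ?EW //= oppr_ge0 ltW.
case: (lerP 0 (U i0 i2)) => hy; first exact: K.
apply: (@Lflip i2 pi U erefl H) => W HW EW.
by apply: K; rewrite ?EW //= oppr_ge0 ltW.
Qed.

Lemma factsB pi U : Hyp pi U ->
  U i0 i3 = 1 -> U i1 i3 = 1 -> U i2 i3 = 1 -> U i3 i3 = -1 ->
  [/\ pi 0 i3 = 1/2, U i3 i1 = 0, U i3 i2 = 0 &
    [/\ U i0 i2 ^+ 2 = 2, U i1 i2 ^+ 2 = 2, U i2 i2 ^+ 2 = 2 &
     exists a, forall l, U l i1 ^+ 2 = 2 + a * U l i2 + (U l i3 - 1)]].
Proof.
move=> H z0 z1 z2 z3.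
have hp := H; case: hp => [h1 _ _ _ _ _].
have S := sump pi U H.
have Sz := @sumx pi U i3 H isT; rewrite z0 z1 z2 z3 in Sz.
have Sx := @sumx pi U i1 H isT.
have Sy := @sumx pi U i2 H isT.
have Sxz := @orthn pi U i1 i3 H isT; rewrite z0 z1 z2 z3 in Sxz.
have Syz := @orthn pi U i2 i3 H isT; rewrite z0 z1 z2 z3 in Syz.
have [t Ht] := Fy pi U H.
have [a [q Hq]] := Fx pi U H.
have P3 : pi 0 i3 = 1/2.
  have -> : pi 0 i3 = ((pi 0 i0 + pi 0 i1 + pi 0 i2 + pi 0 i3) -
     (pi 0 i0 * 1 + pi 0 i1 * 1 + pi 0 i2 * 1 + pi 0 i3 * -1)) / 2 by fld.
  by rewrite S Sz; fld.
have p3n : pi 0 i3 != 0 by rewrite gt_eqF.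
have X3 : U i3 i1 = 0.
  apply: (@mul0_l _ (2 * pi 0 i3)); last by rewrite mulf_neq0 // pnatr_eq0.
  transitivity ((pi 0 i0 * U i0 i1 + pi 0 i1 * U i1 i1 + pi 0 i2 * U i2 i1 + pi 0 i3 * U i3 i1)
   - (pi 0 i0 * U i0 i1 * 1 + pi 0 i1 * U i1 i1 * 1 + pi 0 i2 * U i2 i1 * 1 + pi 0 i3 * U i3 i1 * -1)); first rg.
  by rewrite Sx Sxz subrr.
have Y3 : U i3 i2 = 0.
  apply: (@mul0_l _ (2 * pi 0 i3)); last by rewrite mulf_neq0 // pnatr_eq0.
  transitivity ((pi 0 i0 * U i0 i2 + pi 0 i1 * U i1 i2 + pi 0 i2 * U i2 i2 + pi 0 i3 * U i3 i2)
   - (pi 0 i0 * U i0 i2 * 1 + pi 0 i1 * U i1 i2 * 1 + pi 0 i2 * U i2 i2 * 1 + pi 0 i3 * U i3 i2 * -1)); first rg.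
  by rewrite Sy Syz subrr.
have T1 : t = 1.
  have := Ht i3; rewrite Y3 z3 expr2 mulr0 => E.
  have -> : t = 1 - (1 + t * -1) by rg.
  by rewrite -E subr0.
have Q1 : q = 1.
  have := Hq i3; rewrite X3 Y3 z3 expr2 mulr0 => E.
  have -> : q = 1 - (1 + a * 0 + q * -1) by rg.
  by rewrite -E subr0.
split=> //; split.
- by rewrite Ht z0 T1; rg.
- by rewrite Ht z1 T1; rg.
- by rewrite Ht z2 T1; rg.
- by exists a => l; rewrite Hq Q1; rg.
Qed.

Lemma sqrt2P : Num.sqrt (2 : R) ^+ 2 = 2 /\ 0 < Num.sqrt (2 : R).
Proof. by split; [rewrite sqr_sqrtr // ler0n | rewrite sqrtr_gt0 ltr0n]. Qed.

Lemma L_B0 pi U : Hyp pi U ->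
  U i0 i3 = 1 -> U i1 i3 = 1 -> U i2 i3 = 1 -> U i3 i3 = -1 ->
  0 < U i0 i2 -> 0 < U i1 i2 -> U i2 i2 < 0 -> 0 <= U i0 i1 -> Concl pi U.
Proof.
move=> H z0 z1 z2 z3 y0p y1p y2n x0p.
have [P3 X3 Y3 [Y0s Y1s Y2s [a Ha]]] := factsB pi U H z0 z1 z2 z3.
have hp := H; case: hp => [h1 _ h3 _ _ _].
have [r2 rp] := sqrt2P.
set r := Num.sqrt (2 : R) in r2 rp.
have Y0 : U i0 i2 = r by apply: sqr_eq_pos => //; rewrite Y0s r2.
have Y1 : U i1 i2 = r by apply: sqr_eq_pos => //; rewrite Y1s r2.
have Y2 : U i2 i2 = - r.
  rewrite -[U i2 i2]opprK; congr (- _); apply: sqr_eq_pos => //.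
    by rewrite oppr_gt0.
  by rewrite sqrrN Y2s r2.
have S := sump pi U H.
have Sx := @sumx pi U i1 H isT.
have Sy := @sumx pi U i2 H isT.
have C01 := @compln pi U i0 i1 H isT.
have C02 := @compln pi U i0 i2 H isT.
rewrite Y0 Y1 z0 z1 in C01.
rewrite Y0 Y2 z0 z2 in C02.
rewrite Y0 Y1 Y2 Y3 in Sy.
have rn : r != 0 by rewrite gt_eqF.
have P2 : pi 0 i2 = pi 0 i0 + pi 0 i1.
  apply/eqP; rewrite -subr_eq0; apply/eqP; apply: (@mul0_l _ (- r)); last by rewrite oppr_eq0.
  rewrite -[RHS]Sy; rg.
have P2' : pi 0 i2 = 1/4.
  have -> : pi 0 i2 = ((pi 0 i0 + pi 0 i1 + pi 0 i2 + pi 0 i3) - pi 0 i3 + pi 0 i2 - (pi 0 i0 + pi 0 i1)) / 2 by fld.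
  by rewrite S P3 -P2; fld.
have X01 : U i0 i1 * U i1 i1 = -4.
  transitivity ((1 + U i0 i1 * U i1 i1 + r * r + 1 * 1) - (1 + r ^+ 2 + 1)); first by rewrite !expr2; rg.
  by rewrite C01 r2; rg.
have X02 : U i0 i1 * U i2 i1 = 0.
  transitivity ((1 + U i0 i1 * U i2 i1 + r * - r + 1 * 1) + (r ^+ 2 - 2)); first by rewrite !expr2; rg.
  by rewrite C02 r2; rg.
have x0n : U i0 i1 != 0.
  apply/eqP => E; move: X01; rewrite E mul0r => /eqP; rewrite eq_sym oppr_eq0 pnatr_eq0 //.
have X2 : U i2 i1 = 0 by apply/eqP; move/eqP: X02; rewrite mulf_eq0 (negbTE x0n).
have AR : a * r = 2.
  have := Ha i2; rewrite X2 Y2 z2 expr2 mulr0 => E.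
  have -> : a * r = - (2 + a * - r + (1 - 1)) + 2 by rg.
  by rewrite -E; rg.
have X0 : U i0 i1 = 2.
  apply: sqr_eq_pos => //; first by rewrite lt_def x0n x0p.
  by rewrite Ha Y0 AR z0; rg.
have X1 : U i1 i1 = -2.
  apply/eqP; rewrite -subr_eq0 opprK; apply/eqP; apply: (@mul0_l _ (U i0 i1)) => //.
  transitivity (U i0 i1 * U i1 i1 + 2 * U i0 i1); first rg.
  by rewrite X01 X0; rg.
rewrite X0 X1 X2 X3 in Sx.
have P01 : pi 0 i0 = pi 0 i1.
  apply/eqP; rewrite -subr_eq0; apply/eqP; apply: (@mul0_l _ 2); last by rewrite pnatr_eq0.
  rewrite -[RHS]Sx; rg.
have P0 : pi 0 i0 = 1/8.
  have -> : pi 0 i0 = (pi 0 i0 + pi 0 i1 + (pi 0 i0 - pi 0 i1)) / 2 by fld.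
  by rewrite -P2 P2' P01 subrr; fld.
exists 1%g, (fun _ => false); right; split.
  apply/rowP; apply: ord4; rewrite ppE perm1 mxE /= ?P0 -?P01 ?P0 ?P2' ?P3 //.
apply/matrixP; apply: ord4; apply: ord4;
  rewrite pfE perm1 expr0 mul1r /caseB_U /mx_of_rows mxE /= ?h3 //=;
  by rewrite ?X0 ?X1 ?X2 ?X3 ?Y0 ?Y1 ?Y2 ?Y3 ?z0 ?z1 ?z2 ?z3.
Qed.

Lemma sgn_cases (x : R) : x != 0 -> 0 < x \/ x < 0.
Proof. by move=> H; case/orP: (lt_total H) => ->; [right|left]. Qed.

Lemma sq2_nz (x : R) : x ^+ 2 = 2 -> x != 0.
Proof. by move=> E; apply/eqP => x0; move: E; rewrite x0 expr2 mulr0 => /eqP; rewrite eq_sym pnatr_eq0. Qed.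

Lemma L_B1 pi U : Hyp pi U ->
  U i0 i3 = 1 -> U i1 i3 = 1 -> U i2 i3 = 1 -> U i3 i3 = -1 ->
  0 < U i0 i2 -> 0 < U i1 i2 -> U i2 i2 < 0 -> Concl pi U.
Proof.
move=> H z0 z1 z2 z3 y0p y1p y2n.
case: (lerP 0 (U i0 i1)) => hx; first exact: L_B0.
apply: (@Lflip i1 pi U erefl H) => W HW EW.
by apply: L_B0; rewrite ?EW //= oppr_ge0 ltW.
Qed.

Lemma L_B2 pi U : Hyp pi U ->
  U i0 i3 = 1 -> U i1 i3 = 1 -> U i2 i3 = 1 -> U i3 i3 = -1 ->
  U i2 i2 < 0 -> Concl pi U.
Proof.
move=> H z0 z1 z2 z3 y2n.
have [P3 X3 Y3 [Y0s Y1s Y2s _]] := factsB pi U H z0 z1 z2 z3.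
have hp := H; case: hp => [h1 _ h3 _ _ _].
have [y0p|y0n] := sgn_cases _ (sq2_nz _ Y0s); have [y1p|y1n] := sgn_cases _ (sq2_nz _ Y1s).
- exact: L_B1.
- apply: (@Lflip i2 pi U erefl H) => W HW EW.
  apply: (@Lswap i0 i2 pi W HW) => pi' V HV EV Ep.
  by apply: L_B1; rewrite ?EV ?tpermL ?tpermR ?tpermD // ?EW //= ?oppr_gt0 ?oppr_lt0.
- apply: (@Lflip i2 pi U erefl H) => W HW EW.
  apply: (@Lswap i1 i2 pi W HW) => pi' V HV EV Ep.
  by apply: L_B1; rewrite ?EV ?tpermL ?tpermR ?tpermD // ?EW //= ?oppr_gt0 ?oppr_lt0.
- have Sy := @sumx pi U i2 H isT.
  have : pi 0 i0 * U i0 i2 + pi 0 i1 * U i1 i2 + pi 0 i2 * U i2 i2 + pi 0 i3 * U i3 i2 < 0.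
    rewrite Y3 mulr0 addr0 -oppr_gt0 !opprD !addr_gt0 // -mulrN mulr_gt0 // oppr_gt0 //.
  by rewrite Sy ltxx.
Qed.

Lemma L_B pi U : Hyp pi U ->
  U i0 i3 = 1 -> U i1 i3 = 1 -> U i2 i3 = 1 -> U i3 i3 = -1 -> Concl pi U.
Proof.
move=> H z0 z1 z2 z3.
have [P3 X3 Y3 [Y0s Y1s Y2s _]] := factsB pi U H z0 z1 z2 z3.
have [y2p|y2n] := sgn_cases _ (sq2_nz _ Y2s); last exact: L_B2.
apply: (@Lflip i2 pi U erefl H) => W HW EW.
by apply: L_B2; rewrite ?EW //= oppr_lt0.
Qed.

Lemma sq1 (x : R) : x ^+ 2 = 1 -> x = 1 \/ x = -1.
Proof. by move/eqP; rewrite sqrf_eq1 => /orP[/eqP|/eqP]; [left|right]. Qed.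

Lemma L_Z2 pi U : Hyp pi U -> U i0 i3 = 1 -> U i3 i3 = -1 -> Concl pi U.
Proof.
move=> H z0 z3.
have [z1|z1] := sq1 _ (Fz pi U i1 H); have [z2|z2] := sq1 _ (Fz pi U i2 H).
- exact: L_B.
- exact: L_A.
- apply: (@Lswap i1 i2 pi U H) => pi' V HV EV Ep.
  by apply: L_A; rewrite ?EV ?tpermL ?tpermR ?tpermD.
- apply: (@Lflip i3 pi U erefl H) => W HW EW.
  apply: (@Lswap i0 i3 pi W HW) => pi' V HV EV Ep.
  by apply: L_B; rewrite ?EV ?tpermL ?tpermR ?tpermD // ?EW //= ?z0 ?z1 ?z2 ?z3 ?opprK.
Qed.

Lemma L_Z1 pi U : Hyp pi U -> U i3 i3 = -1 -> Concl pi U.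
Proof.
move=> H z3.
have [z0|z0] := sq1 _ (Fz pi U i0 H); first exact: L_Z2.
have [z1|z1] := sq1 _ (Fz pi U i1 H).
  apply: (@Lswap i0 i1 pi U H) => pi' V HV EV Ep.
  by apply: L_Z2; rewrite ?EV ?tpermL ?tpermR ?tpermD.
have [z2|z2] := sq1 _ (Fz pi U i2 H).
  apply: (@Lswap i0 i2 pi U H) => pi' V HV EV Ep.
  by apply: L_Z2; rewrite ?EV ?tpermL ?tpermR ?tpermD.
have Sz := @sumx pi U i3 H isT.
have S := sump pi U H.
rewrite z0 z1 z2 z3 in Sz.
have : (1 : R) = 0.
  rewrite -S -[RHS]oppr0 -Sz; rg.
by move/eqP; rewrite oner_eq0.
Qed.

Lemma L_Z pi U : Hyp pi U -> Concl pi U.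
Proof.
move=> H.
have [z3|z3] := sq1 _ (Fz pi U i3 H); last exact: L_Z1.
apply: (@Lflip i3 pi U erefl H) => W HW EW.
by apply: L_Z1; rewrite ?EW //= z3.
Qed.
End Main.

Theorem lemma2 (R : rcfType) (pi : 'rV[R]_4) (Q U : 'M[R]_4) (l2 l3 l4 : R) :
  (forall i, 0 < pi 0 i) ->
  \sum_(i < 4) pi 0 i = 1 ->
  (forall i j : 'I_4, i != j -> 0 < Q i j) ->
  (forall i : 'I_4, \sum_(j < 4) Q i j = 0) ->
  (diag_mx pi *m Q)^T = diag_mx pi *m Q ->
  Q = U *m eigdiag l2 l3 l4 *m invmx U ->
  0 > l2 -> l2 >= l3 -> l3 >= l4 ->
  U^T *m diag_mx pi *m U = 1%:M ->
  (forall l : 'I_4, U l 0 = 1) ->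
  (forall i j : 'I_4, (0 < i)%N -> (i <= j)%N -> nu pi U i j j = 0) ->
  exists (s : 'S_4) (e : 'I_4 -> bool),
    (perm_pi s pi = rv4 (1/4) (1/4) (1/4) (1/4) /\
     exists b c : R, [/\ 0 <= b, 0 <= c, b ^+ 2 + c ^+ 2 = 2 &
                         perm_flip_U s e U = caseA_U b c])
    \/
    (perm_pi s pi = rv4 (1/8) (1/8) (1/4) (1/2) /\
     perm_flip_U s e U = caseB_U R).
Proof.
move=> h1 h2 _ _ _ _ _ _ _ hU h3 h6.
apply: (@L_Z R pi U); split => //.
- move=> l; have -> : i0 = 0 by apply: val_inj.
  exact: h3.
- move=> j k; have := congr1 (fun M : 'M[R]_4 => M j k) hU.
  rewrite /= mxE [RHS]mxE => <-; apply: eq_bigr => l _.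
  by rewrite mul_mx_diag !mxE (mulrC (pi 0 l)).
- move=> l m; have := congr1 (fun M : 'M[R]_4 => M l m) (mulmx1C hU).
  rewrite /= mxE [RHS]mxE => <-; rewrite mulr_sumr; apply: eq_bigr => j _.
  by rewrite mul_mx_diag !mxE [U m j * _]mulrC mulrCA.
Qed.
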